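(* Let $K\ge 2$ and let $p,q$ be real numbers with $0<q<p$ and $q=\frac{1-p}{K-1}$. Let $N\ge 1$ and let $y_1,\dots,y_N\in\{1,\dots,K\}$ be observed outputs of the randomized response mechanism, with empirical histogram $\phi\in\Delta$, $\phi_y=\frac{1}{N}|\{u: y_u=y\}|$. Then the likelihood $L(\theta\mid\phi)=\prod_{u=1}^N\bigl(q+(p-q)\theta_{y_u}\bigr)$ has a unique maximizer over $\theta\in\Delta$, and this maximizer equals $\mathrm{MLE}^*(\phi)$.
   Context: $\Delta=\{\theta\in\mathbb{R}^K:\theta_i\ge 0,\ \sum_i\theta_i=1\}$. The randomized response (RR) mechanism on $\{1,\dots,K\}$ outputs, on input $x$, the value $y$ with probability $p$ if $y=x$ and $q$ otherwise; thus if the input is distributed according to $\theta\in\Delta$, the output $y$ has probability $q+(p-q)\theta_y$. Throughout, RR is an $\varepsilon$-locally differentially private mechanism with $\varepsilon=\log(p/q)>0$, so $0<q<p$. Define $\mathrm{MLE}^*(\phi)$ as follows. For a real $\tau$ let $m(\tau)=|\{i:\phi_i<\tau\}|$ and, when $\sum_{i:\phi_i\ge\tau}\phi_i>0$, $c_\tau=\frac{1-m(\tau)\,q}{\sum_{i:\phi_i\ge\tau}\phi_i}$. Let $\tau^*$ be the smallest $\tau\in\{\phi_1,\dots,\phi_K\}$ such that $c_\tau\phi_i\ge q$ for every $i$ with $\phi_i\ge\tau$. Then $\mathrm{MLE}^*(\phi)_i=0$ if $\phi_i<\tau^*$ and $\mathrm{MLE}^*(\phi)_i=\frac{c_{\tau^*}\phi_i-q}{p-q}$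 otherwise. *)

(* Defs.v *)
From mathcomp Require Import all_boot all_order all_algebra.
Set Implicit Arguments. Unset Strict Implicit. Unset Printing Implicit Defensive.
Import Order.TTheory GRing.Theory Num.Theory.
Local Open Scope ring_scope.

Section RR.
Variable R : realFieldType.
Variable K : nat.

Definition in_simplex (theta : 'I_K -> R) : Prop :=
  (forall i, 0 <= theta i) /\ \sum_(i < K) theta i = 1.

Definition histogram (N : nat) (y : 'I_N -> 'I_K) (i : 'I_K) : R :=
  #|[set u | y u == i]|%:R / N%:R.

Definition likelihood (p q : R) (N : nat) (y : 'I_N -> 'I_K)
  (theta : 'I_K -> R) : R :=
  \prod_(u < N) (q + (p - q) * theta (y u)).

Variables (p q : R) (phi : 'I_K -> R).

Definition mcount (tau : R) : nat := #|[set i | phi i < tau]|.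
Definition upper_sum (tau : R) : R := \sum_(i | tau <= phi i) phi i.
Definition c_tau (tau : R) : R := (1 - (mcount tau)%:R * q) / upper_sum tau.
Definition admissible (tau : R) : bool :=
  (0 < upper_sum tau) && [forall i, (tau <= phi i) ==> (q <= c_tau tau * phi i)].

(* tau^* = smallest admissible tau among {phi_1,...,phi_K}
   (default 1 if none is admissible; the theorem asserts one is) *)
Definition tau_star : R := \big[Num.min/1]_(i | admissible (phi i)) phi i.

Definition MLE_star (i : 'I_K) : R :=
  if phi i < tau_star then 0 else (c_tau tau_star * phi i - q) / (p - q).
End RR.

(* Main.v *)
Require Import Defs.
From mathcomp Require Import all_boot all_order all_algebra.
From mathcomp Require Import ring lra.
From Stdlib Require Import FunctionalExtensionality.
Import Order.TTheory GRing.Theory Num.Theory.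

Local Open Scope ring_scope.

Section Tau.
Variables (R : realFieldType) (K : nat) (p q : R) (phi : 'I_K -> R).
Hypotheses (hK : (2 <= K)%N) (hq0 : 0 < q) (hqp : q < p)
  (hq : q = (1 - p) / (K.-1)%:R).
Hypotheses (phi_ge0 : forall i, 0 <= phi i) (phi_sum : \sum_i phi i = 1).

Lemma phi_le1 i : phi i <= 1.
Proof.
rewrite -phi_sum (bigD1 i) //= lerDl; apply: sumr_ge0 => j _; exact: phi_ge0.
Qed.

Lemma Kq : p - q = 1 - K%:R * q.
Proof.
have hK1 : (K%:R : R) = (K.-1)%:R + 1 by rewrite natr1 prednK // ltnW.
have hK0 : ((K.-1)%:R : R) != 0 by rewrite pnatr_eq0 -lt0n -ltnS prednK // ltnW.
move: hq; rewrite hK1 => ->; field; exact: hK0.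
Qed.

Lemma mcountE tau : (mcount phi tau)%:R * q = \sum_i (if phi i < tau then q else 0).
Proof.
rewrite -big_mkcond /= sumr_const mulr_natl /mcount cardsE; congr (_ *+ _).
Qed.

Lemma upperE tau : upper_sum phi tau = \sum_i (if tau <= phi i then phi i else 0).
Proof. by rewrite -big_mkcond. Qed.

Lemma sumKq : \sum_(i < K) q = K%:R * q.
Proof. by rewrite sumr_const card_ord mulr_natl. Qed.

Lemma adm_crit tau : 0 < tau -> 0 < upper_sum phi tau ->
  q * upper_sum phi tau <= (1 - (mcount phi tau)%:R * q) * tau ->
  admissible q phi tau.
Proof.
move=> t0 S0 hc; rewrite /admissible S0 /=; apply/forallP => i; apply/implyP => hi.
rewrite /c_tau.
set S := upper_sum phi tau in S0 hc *; set a := 1 - _ in hc *.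
have : q <= a / S * tau.
  by rewrite mulrAC ler_pdivlMr // mulrC.
move=> h1.
have ca : 0 < a / S by rewrite -(pmulr_lgt0 _ t0); apply: lt_le_trans h1.
apply: (le_trans h1); rewrite ler_pM2l //.
Qed.

Lemma exists_adm : exists i, admissible q phi (phi i).
Proof.
have i0 : 'I_K by apply: (Ordinal (n:=K) (m:=0)); apply: leq_trans hK.
pose j := [arg max_(k > i0) phi k]%O.
have hj : forall k, phi k <= phi j.
  by rewrite /j; case: arg_maxP => // m _ h k; apply: h.
exists j.
have M0 : 0 < phi j.
  rewrite lt_neqAle phi_ge0 andbT; apply/eqP => h0.
  have : \sum_i phi i <= \sum_(i < K) (0:R) by apply: ler_sum => k _; rewrite h0 hj.
  rewrite big1_eq.
  by rewrite phi_sum ler10.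
have S0 : 0 < upper_sum phi (phi j).
  by rewrite /upper_sum (bigD1 j) //= ltr_pwDl // sumr_ge0.
apply: adm_crit => //.
rewrite mcountE upperE mulr_sumr.
have AB : \sum_i (if phi i < phi j then q else 0) + \sum_i (if phi j <= phi i then q else 0)
   = K%:R * q.
  by rewrite -sumKq -big_split; apply: eq_bigr => k _; case: (leP (phi j) (phi k)) => _ /=; rewrite ?addr0 ?add0r.
have -> : \sum_i q * (if phi j <= phi i then phi i else 0)
          = phi j * \sum_i (if phi j <= phi i then q else 0).
  rewrite mulr_sumr; apply: eq_bigr => k _.
  case: (leP (phi j) (phi k)) => h; last by rewrite !mulr0.
  by rewrite (@le_anti _ _ (phi k) (phi j)) ?h ?hj // mulrC.
have := Kq; move: AB; set A := \sum_i _; set B := \sum_i _ => AB hKq.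
have : 0 <= phi j * (p - q) by rewrite mulr_ge0 // ?subr_ge0 ?ltW // phi_ge0.
rewrite hKq -AB; lra.
Qed.

Notation t := (tau_star q phi).

Lemma t_le i : admissible q phi (phi i) -> t <= phi i.
Proof. by move=> h; rewrite /tau_star (bigD1 i) //= ge_min lexx. Qed.

Lemma t_adm : exists j, admissible q phi (phi j) /\ t = phi j.
Proof.
have [i0 h0] := exists_adm.
pose j := [arg min_(k < i0 | admissible q phi (phi k)) phi k]%O.
have [hj hmin] : admissible q phi (phi j) /\
   forall k, admissible q phi (phi k) -> phi j <= phi k.
  by rewrite /j; case: arg_minP => // m hm h; split => // k /h.
exists j; split => //; apply: le_anti; rewrite t_le //=.
rewrite /tau_star; elim/big_ind: _ => //.
  exact: phi_le1.
by move=> x z hx hz; rewrite le_min hx hz.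
Qed.

Notation S := (upper_sum phi t).
Notation c := (c_tau q phi t).
Notation m := (mcount phi t).

Lemma S_pos : 0 < S.
Proof. by have [j [/andP [h _] ->]] := t_adm. Qed.

Lemma active i : t <= phi i -> q <= c * phi i.
Proof.
have [j [/andP [_ /forallP h] ->]] := t_adm.
by move=> hi; have /implyP := h i; apply.
Qed.

Lemma c_pos : 0 < c.
Proof.
have [j [_ hj]] := t_adm.
have := active j; rewrite -hj lexx => /(_ isT) h.
have ht : 0 <= t by rewrite hj phi_ge0.
have : 0 < c * t by apply: lt_le_trans h.
nra.
Qed.

Lemma cS : c * S = 1 - m%:R * q.
Proof. by rewrite /c_tau divfK // gt_eqF // S_pos. Qed.

Lemma inactive i : phi i < t -> c * phi i < q.
Proof.
move=> hi; rewrite ltNge; apply/negP => hci.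
pose j := [arg max_(k > i | phi k < t) phi k]%O.
have [hj hmax] : phi j < t /\ forall k, phi k < t -> phi k <= phi j.
  by rewrite /j; case: arg_maxP => // m0 hm h; split => // k /h.
have hij : phi i <= phi j by apply: hmax.
have cj : q <= c * phi j.
  by apply: (le_trans hci); rewrite ler_pM2l // c_pos.
have j0 : 0 < phi j.
  have : 0 < c * phi j by apply: lt_le_trans cj.
  have := c_pos; nra.
suff /t_le : admissible q phi (phi j) by rewrite leNgt hj.
pose Z := \sum_k (if (phi j <= phi k) && (phi k < t) then (1:R) else 0).
have hS' : upper_sum phi (phi j) = S + phi j * Z.
  rewrite !upperE mulr_sumr -big_split; apply: eq_bigr => k _ /=.
  case: (leP (phi j) (phi k)) => h1; case: (leP t (phi k)) => h2 /=;
   rewrite ?mulr0 ?mulr1 ?addr0 ?add0r //.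
  all: try lra.
  by apply: le_anti; rewrite h1 hmax.
have hm' : (mcount phi (phi j))%:R * q = m%:R * q - q * Z.
  rewrite !mcountE mulr_sumr -sumrB; apply: eq_bigr => k _ /=.
  case: (leP (phi j) (phi k)) => h1; case: (leP t (phi k)) => h2 /=;
   rewrite ?mulr0 ?mulr1 ?subr0 ?subrr //.
  all: try lra.
have Z0 : 0 <= Z by apply: sumr_ge0 => k _; case: ifP.
apply: adm_crit => //.
- rewrite hS'; have := S_pos; have : 0 <= phi j * Z by rewrite mulr_ge0 // ltW.
  lra.
- have e : 1 - (m%:R * q - q * Z) = c * S + q * Z by rewrite cS; ring.
  rewrite hS' hm' e.
  have : 0 <= S * (c * phi j - q) by rewrite mulr_ge0 // ?subr_ge0 // ltW // S_pos.
  nra.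
Qed.

Definition xs i := if phi i < t then q else c * phi i.

Lemma pq0 : p - q != 0.
Proof. by rewrite subr_eq0 gt_eqF. Qed.

Lemma xsE i : q + (p - q) * MLE_star p q phi i = xs i.
Proof.
rewrite /MLE_star /xs; case: ifP => _; first by rewrite mulr0 addr0.
by field; exact: pq0.
Qed.

Lemma xs_pos i : 0 < xs i.
Proof.
rewrite /xs; case: (ltP (phi i) t) => //= h.
exact: lt_le_trans hq0 (active _ h).
Qed.

Lemma sum_inact : \sum_i (if phi i < t then phi i else 0) = 1 - S.
Proof.
rewrite -phi_sum upperE -sumrB; apply: eq_bigr => k _.
by case: (ltP (phi k) t) => _; rewrite ?subrr ?subr0.
Qed.

Lemma sum_act : \sum_i (if phi i < t then 0 else q) = K%:R * q - m%:R * q.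
Proof.
rewrite mcountE -sumKq -sumrB; apply: eq_bigr => k _.
by case: (ltP (phi k) t) => _; rewrite ?subrr ?subr0.
Qed.

Lemma MLE_simplex : in_simplex (MLE_star p q phi).
Proof.
split.
  move=> i; rewrite /MLE_star; case: ifPn => [_|]; first by [].
  rewrite -leNgt => h; apply: divr_ge0; rewrite subr_ge0; [exact: active | exact: ltW].
have e : \sum_(i < K) MLE_star p q phi i
    = (\sum_i (c * (if t <= phi i then phi i else 0) - (if phi i < t then 0 else q))) / (p - q).
  rewrite mulr_suml; apply: eq_bigr => k _; rewrite /MLE_star.
  by case: (ltP (phi k) t) => _; rewrite ?mulr0 ?subr0 ?mul0r.
rewrite e sumrB -mulr_sumr -upperE cS sum_act Kq.
rewrite (_ : 1 - m%:R * q - (K%:R * q - m%:R * q) = 1 - K%:R * q); last by ring.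
by rewrite -Kq divff // pq0.
Qed.

Lemma key (theta : 'I_K -> R) : in_simplex theta ->
  let x i := q + (p - q) * theta i in
  \sum_i phi i * (x i / xs i) <= 1 /\
  (\sum_i phi i * (x i / xs i) = 1 -> forall i, phi i < t -> theta i = 0).
Proof.
move=> [th0 th1] x.
have cpos := c_pos.
pose d i := (p - q) * theta i.
have d0 i : 0 <= d i by rewrite mulr_ge0 // subr_ge0 ltW.
pose g i := if phi i < t then phi i + d i / c else (q + d i) / c.
have gsum : \sum_i g i = 1.
  have e : \sum_i g i = \sum_i (if phi i < t then phi i else 0)
     + (\sum_i d i + \sum_i (if phi i < t then 0 else q)) / c.
    rewrite mulrDl !mulr_suml -!big_split; apply: eq_bigr => k _ /=.
    rewrite /g; case: (ltP (phi k) t) => _ /=; ring.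
  rewrite e sum_inact sum_act -mulr_sumr th1 mulr1 Kq.
  rewrite (_ : 1 - K%:R * q + (K%:R * q - m%:R * q) = c * S); last by rewrite cS; ring.
  rewrite mulrC mulKf ?gt_eqF //; ring.
have hdiff i : g i - phi i * (x i / xs i)
   = if phi i < t then d i * (q - c * phi i) / (c * q) else 0.
  rewrite /g /x /xs -/(d i); case: (ltP (phi i) t) => h.
    by field; rewrite ?gt_eqF.
  have cp : 0 < c * phi i by exact: lt_le_trans hq0 (active _ h).
  have phi0 : phi i != 0 by apply/eqP => e; move: cp; rewrite e mulr0 ltxx.
  rewrite /=; field; rewrite ?phi0 ?gt_eqF //.
have hd0 i : 0 <= g i - phi i * (x i / xs i).
  rewrite hdiff; case: ifP => // h.
  apply: divr_ge0; last by rewrite mulr_ge0 // ltW.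
  by rewrite mulr_ge0 // subr_ge0 ltW // inactive.
have hle : \sum_i phi i * (x i / xs i) <= 1.
  rewrite -gsum -subr_ge0 -sumrB; exact: sumr_ge0.
split => // heq i hi.
have z : \sum_i (g i - phi i * (x i / xs i)) = 0 by rewrite sumrB gsum heq subrr.
have := psumr_eq0P (fun k _ => hd0 k) z (i := i) isT.
rewrite hdiff hi => e0.
have hq' : q - c * phi i != 0 by rewrite subr_eq0 gt_eqF // inactive.
have : d i = (d i * (q - c * phi i) / (c * q)) * (c * q) / (q - c * phi i).
  by field; rewrite hq' !gt_eqF.
rewrite e0 !mul0r /d => /eqP; rewrite mulf_eq0 (negbTE pq0) /= => /eqP //.
Qed.
End Tau.
Section Pf.
Variables (R : realFieldType) (K N : nat) (y : 'I_N -> 'I_K).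
Hypothesis hN : (0 < N)%N.

Definition cnt (i : 'I_K) : nat := #|[set u | y u == i]|.

Lemma sum_count (f : 'I_K -> R) :
  \sum_(u < N) f (y u) = \sum_(i < K) (cnt i)%:R * f i.
Proof.
rewrite (partition_big y xpredT) //=; apply: eq_bigr => i _.
rewrite (eq_bigr (fun _ => f i)); last by move=> u /eqP ->.
rewrite sumr_const /cnt cardsE mulr_natl.
congr (_ *+ _); apply: eq_card => u //.
Qed.

Let phi := histogram R y.

Lemma NR0 : (N%:R : R) != 0.
Proof. by rewrite pnatr_eq0 -lt0n. Qed.

Lemma sum_phi f : (\sum_(u < N) f (y u)) / N%:R = \sum_i phi i * f i.
Proof.
rewrite sum_count mulr_suml; apply: eq_bigr => i _.
rewrite /phi /histogram -/(cnt i); field; exact: NR0.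
Qed.

Lemma phi_ge0 i : 0 <= phi i.
Proof. by rewrite /phi /histogram divr_ge0. Qed.

Lemma phi_sum : \sum_i phi i = 1.
Proof.
have := sum_phi (fun _ => 1); rewrite sumr_const card_ord.
under eq_bigr do rewrite mulr1.
move <-; rewrite -[_ *+ _]mulr_natr mul1r divff //; exact: NR0.
Qed.

Lemma phi_le1_A i : phi i <= 1.
Proof.
rewrite -phi_sum (bigD1 i) //= lerDl; apply: sumr_ge0 => j _; exact: phi_ge0.
Qed.

Lemma cnt_pos i : 0 < phi i -> exists u, y u = i.
Proof.
rewrite /phi /histogram -/(cnt i) pmulr_lgt0 ?invr_gt0 ?ltr0n // /cnt.
by move/card_gt0P => [u]; rewrite inE => /eqP; exists u.
Qed.
End Pf.

Theorem theorem1 (R : realFieldType) (K N : nat) (p q : R)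
  (y : 'I_N -> 'I_K) :
  (2 <= K)%N -> 0 < q -> q < p -> q = (1 - p) / (K.-1)%:R -> (0 < N)%N ->
  let phi := histogram R y in
  (exists i : 'I_K, admissible q phi (phi i)) /\
  in_simplex (MLE_star p q phi) /\
  (forall theta : 'I_K -> R, in_simplex theta ->
     likelihood p q y theta <= likelihood p q y (MLE_star p q phi)) /\
  (forall theta : 'I_K -> R, in_simplex theta ->
     likelihood p q y theta = likelihood p q y (MLE_star p q phi) ->
     theta = MLE_star p q phi).
Proof.
move=> hK hq0 hqp hq hN phi.
have phi0 : forall i, 0 <= phi i by move=> i; exact: phi_ge0.
have phis : \sum_i phi i = 1 by exact: phi_sum.
split; first exact: (exists_adm _ _ _ _ _ hK hq0 hqp hq phi0 phis).
split; first exact: (MLE_simplex _ _ _ _ _ hK hq0 hqp hq phi0 phis).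
pose X := xs R K q phi.
have Xpos : forall i, 0 < X i := xs_pos _ _ _ _ _ hK hq0 hqp hq phi0 phis.
have LM : likelihood p q y (MLE_star p q phi) = \prod_(u < N) X (y u).
  by apply: eq_bigr => u _; rewrite xsE.
have P0 : 0 < \prod_(u < N) X (y u) by apply: prodr_gt0 => u _.
suff main : forall theta, in_simplex theta ->
  let a := fun u => (q + (p - q) * theta (y u)) / X (y u) in
  likelihood p q y theta = (\prod_(u < N) a u) * \prod_(u < N) X (y u) /\
  \prod_(u < N) a u <= 1 /\
  (\prod_(u < N) a u = 1 -> forall i, theta i = MLE_star p q phi i).
  split.
    move=> th hth; have [e [h _]] := main th hth.
    by rewrite e LM ler_piMl // ?ltW // prodr_ge0 // => u _; rewrite divr_ge0 // ?ltW // addr_ge0 ?ltW // mulr_ge0 // ?subr_ge0 ?ltW // hth.1.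
  move=> th hth hL; have [e [_ h]] := main th hth.
  apply: functional_extensionality => i; apply: h.
  move: hL; rewrite e LM => /eqP; rewrite -subr_eq0 -{2}[\prod_(u < N) X (y u)]mul1r -mulrBl.
  by rewrite mulf_eq0 (gt_eqF P0) orbF subr_eq0 => /eqP.
move=> th hth a.
have [kle keq] := key _ _ _ _ _ hK hq0 hqp hq phi0 phis th hth.
have a0 : forall u, 0 <= a u.
  move=> u; apply: divr_ge0; last exact: ltW.
  apply: addr_ge0; first exact: ltW.
  by apply: mulr_ge0; [rewrite subr_ge0 ltW | exact: hth.1].
have mue := sum_phi _ _ _ y hN (fun i => (q + (p - q) * th i) / X i).
have AG := leif_AGM (A := 'I_N) (E := a) (fun u _ => a0 u).
rewrite card_ord in AG.
have e1 : forall F : 'I_N -> R, \prod_(i in 'I_N) F i = \prod_(u < N) F u.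
  by move=> F; apply: eq_bigl.
have e2 : forall F : 'I_N -> R, \sum_(i in 'I_N) F i = \sum_(u < N) F u.
  by move=> F; apply: eq_bigl.
rewrite e1 e2 in AG.
set mu := (\sum_(u < N) a u) / N%:R in AG.
have mu1 : mu <= 1 by rewrite /mu /a mue.
have mu0 : 0 <= mu by rewrite /mu divr_ge0 // sumr_ge0.
split.
  rewrite /likelihood -big_split; apply: eq_bigr => u _.
  by rewrite /a /= divfK // gt_eqF // Xpos.
split; first exact: (le_trans AG (exprn_ile1 _ mu0 mu1)).
move=> h1.
have muN : 1 <= mu ^+ N by rewrite -h1 AG.
have mu1' : mu = 1.
  apply: le_anti; rewrite mu1 /=; rewrite leNgt; apply/negP => hlt.
  by move: muN; rewrite leNgt (expr_lt1 hN mu0) hlt.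
have /forall_inP hall : [forall i in 'I_N, forall j in 'I_N, a i == a j].
  by rewrite -(eq_leif AG) h1 mu1' expr1n.
have au : forall u, a u = 1.
  move=> u; rewrite -mu1' /mu (eq_bigr (fun _ => a u)).
    by rewrite sumr_const card_ord -[a u *+ N]mulr_natr mulfK // pnatr_eq0 -lt0n.
  by move=> v _; have /forall_inP := hall v isT => /(_ u isT) /eqP.
have mue1 : \sum_i phi i * ((q + (p - q) * th i) / xs R K q phi i) = 1.
  by rewrite -mu1' /mu /a mue.
move=> i; case: (ltP (phi i) (tau_star q phi)) => hi.
  by rewrite (keq mue1 i hi) /MLE_star hi.
have hc := active _ _ _ _ _ hK hq0 hqp hq phi0 phis i hi.
have ph : 0 < phi i.
  rewrite lt_neqAle phi0 andbT; apply/eqP => e0.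
  by move: hc; rewrite -e0 mulr0 leNgt hq0.
have [u hu] := cnt_pos _ _ _ y hN i ph.
have := au u; rewrite /a /= hu => e.
have Xi : X i != 0 by rewrite gt_eqF ?Xpos.
have := divfK Xi (q + (p - q) * th i); rewrite e mul1r /X -(xsE _ _ _ _ _ hqp).
by move/addrI/(mulfI (pq0 _ _ _ hqp)).
Qed.
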